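(* Let $X$ be a proper CAT(0) space and let $b$ and $c$ be distinct geodesic rays starting at $\mathfrak o$. Then for every $n>0$, $c$ is not contained in $\mathcal N_\kappa(b,n)$. In particular, distinct geodesic rays do not $\kappa$--fellow travel, so each $\kappa$--fellow travelling class of quasi-geodesic rays contains at most one geodesic ray.
   Context: $X$ has base point $\mathfrak o$, $\|x\|=d_X(\mathfrak o,x)$. $\kappa:[0,\infty)\to[1,\infty)$ is monotone increasing, concave and sublinear, $\kappa(x):=\kappa(\|x\|)$. $\mathcal N_\kappa(Z,n)=\{x: d_X(x,Z)\le n\,\kappa(x)\}$. Two quasi-geodesic rays (continuous quasi-isometric embeddings of $[0,\infty)$ starting at $\mathfrak o$) $\kappa$--fellow travel if each lies in some $(\kappa,n)$--neighbourhood of the other. *)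

(* Defs.v *)
From Stdlib Require Import Reals.
Open Scope R_scope.

Definition is_metric {X : Type} (d : X -> X -> R) : Prop :=
  (forall x y, 0 <= d x y) /\
  (forall x y, d x y = 0 <-> x = y) /\
  (forall x y, d x y = d y x) /\
  (forall x y z, d x z <= d x y + d y z).

Definition geodesic_from_to {X : Type} (d : X -> X -> R) (g : R -> X) (x y : X) : Prop :=
  g 0 = x /\ g (d x y) = y /\
  forall s t, 0 <= s <= d x y -> 0 <= t <= d x y -> d (g s) (g t) = Rabs (s - t).

Definition geodesic_space {X : Type} (d : X -> X -> R) : Prop :=
  forall x y, exists g, geodesic_from_to d g x y.

Definition eucl (a b : R * R) : R :=
  sqrt ((fst a - fst b) ^ 2 + (snd a - snd b) ^ 2).

Definition seg_point (a b : R * R) (s : R) : R * R :=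
  let l := eucl a b in
  (fst a + (s / l) * (fst b - fst a), snd a + (s / l) * (snd b - snd a)).

(** Since x, y, z range over all triples, this covers every pair of
    distinct sides; points on the same side satisfy it with equality. *)
Definition CAT0_ineq {X : Type} (d : X -> X -> R) : Prop :=
  forall (x y z : X) (g1 g2 : R -> X) (a b c : R * R) (s t : R),
    geodesic_from_to d g1 x y -> geodesic_from_to d g2 x z ->
    eucl a b = d x y -> eucl a c = d x z -> eucl b c = d y z ->
    0 <= s <= d x y -> 0 <= t <= d x z ->
    d (g1 s) (g2 t) <= eucl (seg_point a b s) (seg_point a c t).

Definition CAT0_space {X : Type} (d : X -> X -> R) : Prop :=
  is_metric d /\ geodesic_space d /\ CAT0_ineq d.

(** Proper: closed balls are compact (sequential compactness, equivalent
    to compactness in metric spaces). *)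
Definition proper_space {X : Type} (d : X -> X -> R) : Prop :=
  forall (x0 : X) (r : R) (u : nat -> X),
    (forall n, d x0 (u n) <= r) ->
    exists (phi : nat -> nat) (l : X),
      (forall n m, (n < m)%nat -> (phi n < phi m)%nat) /\
      d x0 l <= r /\
      forall eps, eps > 0 -> exists N, forall n, (n >= N)%nat -> d (u (phi n)) l < eps.

Definition quasi_geodesic_ray {X : Type} (d : X -> X -> R) (o : X) (q : R -> X) : Prop :=
  q 0 = o /\
  (forall t, 0 <= t -> forall eps, eps > 0 -> exists delta, delta > 0 /\
      forall s, 0 <= s -> Rabs (s - t) < delta -> d (q s) (q t) < eps) /\
  exists K C, K >= 1 /\ C >= 0 /\
    forall s t, 0 <= s -> 0 <= t ->
      Rabs (s - t) / K - C <= d (q s) (q t) <= K * Rabs (s - t) + C.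

Definition geodesic_ray {X : Type} (d : X -> X -> R) (o : X) (c : R -> X) : Prop :=
  c 0 = o /\ forall s t, 0 <= s -> 0 <= t -> d (c s) (c t) = Rabs (s - t).

Definition distinct_rays {X : Type} (b c : R -> X) : Prop :=
  exists t, 0 <= t /\ b t <> c t.

Definition sublinear_kappa (kappa : R -> R) : Prop :=
  (forall t, 0 <= t -> 1 <= kappa t) /\
  (forall s t, 0 <= s -> s <= t -> kappa s <= kappa t) /\
  (forall s t l, 0 <= s -> 0 <= t -> 0 <= l <= 1 ->
      l * kappa s + (1 - l) * kappa t <= kappa (l * s + (1 - l) * t)) /\
  (forall eps, eps > 0 -> exists T, forall t, t >= T -> t > 0 -> kappa t / t < eps).

(** d(x, Z) <= r, where Z = image of [0,oo) under the ray b, and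
    d(x,Z) = inf_{z in Z} d(x,z). *)
Definition dist_to_ray_le {X : Type} (d : X -> X -> R) (x : X) (b : R -> X) (r : R) : Prop :=
  forall eps, eps > 0 -> exists t, 0 <= t /\ d x (b t) < r + eps.

Definition in_kappa_nbhd {X : Type} (d : X -> X -> R) (o : X) (kappa : R -> R)
    (c b : R -> X) (n : R) : Prop :=
  forall t, 0 <= t -> dist_to_ray_le d (c t) b (n * kappa (d o (c t))).

Definition kappa_fellow_travel {X : Type} (d : X -> X -> R) (o : X) (kappa : R -> R)
    (b c : R -> X) : Prop :=
  (exists n, n > 0 /\ in_kappa_nbhd d o kappa c b n) /\
  (exists n, n > 0 /\ in_kappa_nbhd d o kappa b c n).

(* Main.v *)
Require Import Defs.
From Stdlib Require Import Reals Lra Psatz.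
Open Scope R_scope.

Lemma sqrt_sq_eq (e v : R) : 0 <= v -> e = v * v -> sqrt e = v.
Proof. intros Hv ->. apply sqrt_square; lra. Qed.

Lemma tri (T D s : R) : 0 < T -> 0 <= D <= 2 * T -> 0 <= s <= T ->
  exists a b c, eucl a b = T /\ eucl a c = T /\ eucl b c = D /\
    eucl (seg_point a b s) (seg_point a c s) = s * D / T.
Proof.
  intros HT HD Hs.
  set (x := T - D * D / (2 * T)).
  assert (Hx1 : x <= T).
  { unfold x. assert (0 <= D * D / (2 * T)).
    { apply Rmult_le_pos; [nra| left; apply Rinv_0_lt_compat; lra]. } lra. }
  assert (Hx2 : - T <= x).
  { unfold x. assert (D * D / (2 * T) <= 2 * T).
    { apply Rmult_le_reg_r with (2 * T); [lra|].
      unfold Rdiv; rewrite Rmult_assoc, Rinv_l by lra. nra. } lra. }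
  set (y := sqrt (T * T - x * x)).
  assert (Hy : y * y = T * T - x * x).
  { unfold y. apply sqrt_sqrt. nra. }
  assert (Hxd : 2 * T * T - 2 * T * x = D * D).
  { unfold x. field_simplify; [|lra]. reflexivity. }
  exists (0, 0), (T, 0), (x, y).
  assert (E1 : eucl (0, 0) (T, 0) = T).
  { unfold eucl; simpl. apply sqrt_sq_eq; lra. }
  assert (E2 : eucl (0, 0) (x, y) = T).
  { unfold eucl; simpl. apply sqrt_sq_eq; nra. }
  split; [exact E1|]. split; [exact E2|]. split.
  { unfold eucl; simpl. apply sqrt_sq_eq; [lra|]. nra. }
  unfold seg_point. rewrite E1, E2. unfold eucl; simpl.
  apply sqrt_sq_eq.
  { unfold Rdiv. apply Rmult_le_pos; [nra| left; apply Rinv_0_lt_compat; lra]. }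
  assert (Hy2 : y ^ 2 = T * T - x * x) by (rewrite <- Hy; ring).
  field_simplify; try lra. rewrite Hy2.
  f_equal. replace (D ^ 2) with (D * D) by ring. rewrite <- Hxd. ring.
Qed.

Lemma ray_dist {X : Type} (d : X -> X -> R) (o : X) (b : R -> X) T :
  geodesic_ray d o b -> 0 <= T -> d o (b T) = T.
Proof.
  intros [H0 H] HT. rewrite <- H0, H by lra.
  rewrite Rabs_left1 by lra. lra.
Qed.

Lemma ray_geo {X : Type} (d : X -> X -> R) (o : X) (b : R -> X) T :
  geodesic_ray d o b -> 0 <= T -> geodesic_from_to d b o (b T).
Proof.
  intros Hb HT. pose proof (ray_dist d o b T Hb HT) as E.
  destruct Hb as [H0 H]. unfold geodesic_from_to. rewrite E. split; [exact H0|]. split; [reflexivity|].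
  intros s t Hs Ht. apply H; lra.
Qed.

Theorem lemma3p3 (X : Type) (d : X -> X -> R) (o : X) (kappa : R -> R)
    (hX : CAT0_space d) (hprop : proper_space d) (hk : sublinear_kappa kappa)
    (b c : R -> X) (hb : geodesic_ray d o b) (hc : geodesic_ray d o c)
    (hbc : distinct_rays b c) :
  (forall n, n > 0 -> ~ in_kappa_nbhd d o kappa c b n) /\
  ~ kappa_fellow_travel d o kappa b c.
Proof.
  assert (P1 : forall n, n > 0 -> ~ in_kappa_nbhd d o kappa c b n).
  { intros n Hn Hin.
    destruct hX as [[Hpos [Hzero [Hsym Htri]]] [_ Hcat]].
    destruct hbc as [t0 [Ht0 Hne]].
    assert (Ht0p : 0 < t0).
    { destruct Ht0 as [Ht0|Ht0]; [exact Ht0|]. subst t0.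
      exfalso; apply Hne. rewrite (proj1 hb), (proj1 hc). reflexivity. }
    set (delta := d (b t0) (c t0)).
    assert (Hdel : 0 < delta).
    { destruct (Hpos (b t0) (c t0)) as [H|H]; [exact H|].
      exfalso; apply Hne. apply Hzero. unfold delta; auto. }
    assert (Hcmp : forall T, t0 <= T -> delta * T <= t0 * d (b T) (c T)).
    { intros T HT.
      set (D := d (b T) (c T)).
      assert (HD : 0 <= D <= 2 * T).
      { split; [apply Hpos|]. unfold D.
        pose proof (Htri (b T) o (c T)).
        rewrite (Hsym (b T) o), (ray_dist d o b T hb), (ray_dist d o c T hc) in H by lra. lra. }
      destruct (tri T D t0 ltac:(lra) HD ltac:(lra)) as [a [b' [c' [E1 [E2 [E3 E4]]]]]].
      pose proof (Hcat o (b T) (c T) b c a b' c' t0 t0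
        (ray_geo d o b T hb ltac:(lra)) (ray_geo d o c T hc ltac:(lra))) as K.
      rewrite (ray_dist d o b T hb), (ray_dist d o c T hc) in K by lra.
      specialize (K E1 E2 E3 ltac:(lra) ltac:(lra)).
      rewrite E4 in K. fold delta in K.
      apply Rmult_le_compat_r with (r := T) in K; [|lra].
      unfold Rdiv in K. rewrite Rmult_assoc, Rinv_l in K by lra. lra. }
    assert (Hup : forall T, 0 <= T -> d (b T) (c T) < 2 * n * kappa T + 2).
    { intros T HT. destruct (Hin T HT 1 ltac:(lra)) as [s [Hs Hds]].
      rewrite (ray_dist d o c T hc HT) in Hds.
      assert (Hbs : d (b T) (b s) = Rabs (T - s)) by (apply (proj2 hb); lra).
      assert (Hab : Rabs (T - s) <= d (c T) (b s)).
      { pose proof (Htri o (c T) (b s)). pose proof (Htri o (b s) (c T)).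
        rewrite (ray_dist d o b s hb Hs), (ray_dist d o c T hc HT) in *.
        rewrite (Hsym (b s) (c T)) in H0.
        apply Rabs_le; lra. }
      pose proof (Htri (b T) (b s) (c T)). rewrite (Hsym (b s) (c T)) in H. lra. }
    destruct hk as [_ [_ [_ Hsub]]].
    destruct (Hsub (delta / (4 * n * t0))) as [T1 HT1].
    { unfold Rdiv. apply Rmult_lt_0_compat; [lra|apply Rinv_0_lt_compat; nra]. }
    set (T := Rmax (Rmax T1 t0) (Rmax 1 (4 * t0 / delta + 1))).
    assert (HTa : T1 <= T /\ t0 <= T /\ 1 <= T /\ 4 * t0 / delta + 1 <= T).
    { unfold T. pose proof (Rmax_l T1 t0). pose proof (Rmax_r T1 t0).
      pose proof (Rmax_l 1 (4 * t0 / delta + 1)). pose proof (Rmax_r 1 (4 * t0 / delta + 1)).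
      pose proof (Rmax_l (Rmax T1 t0) (Rmax 1 (4 * t0 / delta + 1))).
      pose proof (Rmax_r (Rmax T1 t0) (Rmax 1 (4 * t0 / delta + 1))). lra. }
    destruct HTa as [HTa [HTb [HTc HTd]]].
    specialize (HT1 T ltac:(lra) ltac:(lra)).
    assert (Hk : kappa T < delta / (4 * n * t0) * T).
    { apply Rmult_lt_compat_r with (r := T) in HT1; [|lra].
      unfold Rdiv in HT1 at 1. rewrite Rmult_assoc, Rinv_l, Rmult_1_r in HT1 by lra.
      exact HT1. }
    assert (Hk2 : 2 * n * t0 * kappa T < delta * T / 2).
    { apply Rmult_lt_compat_l with (r := 2 * n * t0) in Hk; [|nra].
      replace (2 * n * t0 * (delta / (4 * n * t0) * T)) with (delta * T / 2) in Hk
        by (field; lra). exact Hk. }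
    assert (Hd : 4 * t0 < delta * T).
    { assert (4 * t0 / delta < T) by lra.
      apply Rmult_lt_compat_l with (r := delta) in H; [|lra].
      replace (delta * (4 * t0 / delta)) with (4 * t0) in H by (field; lra). exact H. }
    pose proof (Hcmp T HTb). pose proof (Hup T ltac:(lra)).
    apply Rmult_lt_compat_l with (r := t0) in H0; [|lra]. nra. }
  split; [exact P1|].
  intros [[n [Hn Hin]] _]. exact (P1 n Hn Hin).
Qed.
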